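(* For every instance such that $|S_2|=1$ and $\pi_1+\pi_3+\pi_4-1=0$, we have $H^{PW''}\le \tfrac{20}{11}H^*$.
   Context: An instance consists of an integer $n\ge 1$ and growth rates $1=h(1)\ge h(2)\ge\cdots\ge h(n)>0$ of bamboos $b_1,\dots,b_n$. Bamboo Garden Trimming (discrete version): - All heights are $0$ initially. - On each day $t=1,2,\dots$ every bamboo $b_j$ grows by $h(j)$. - At the end of each day the gardener cuts exactly one bamboo $\sigma(t)\in\{1,\dots,n\}$ back to height $0$. The height of a schedule $\sigma:\mathbb{N}\to\{1,\dots,n\}$ is the supremum, over all days $t$ and all $j$, of the height of $b_j$ at the end of day $t$ just before the cut. $H^*$ denotes the infimum of this height over all schedules. Value of algorithm PW'': - Split $\{1,\dots,n\}$ into four sets: - $S_1=\{j: \tfrac23<h(j)\le 1\}$; - $S_2=\{j:\tfrac12<h(j)\le\tfrac23\}$; - $S_3=\{j: h(j)\le\tfrac12 \text{ and } \tfrac23 2^{-k}<h(j)\le 2^{-k}\text{ for some integer }k\ge1\}$; - $S_4=\{j: h(j)\le\tfrac12\text{ and } 2^{-(k+1)}<h(j)\le \tfrac23 2^{-k}\text{ for some integer }k\ge 1\}$. - Modified growths: $h''(j)=2^{-k}$ for $j\in S_3$ and $h''(j)=\tfrac23 2^{-k}$ for $j\in S_4$, with $k$ as in the definition of the set. - Let $\pi_1=|S_1|$, $sh_3=\sum_{j\in S_3}h''(j)$, $sh_4=\sum_{j\in S_4}h''(j)$, $\pi_3=\lfloor sh_3\rfloor$, $\pi_4=\lfloor sh_4\rfloor$,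 $f_3=sh_3-\pi_3$, $f_4=sh_4-\pi_4$. - Option (a): $\pi_R(a)=\lceil f_3+f_4\rceil$ and $z(a)=\pi_1+|S_2|+\pi_3+\pi_4+\pi_R(a)$. - Option (b): if $S_2=\emptyset$ put $z(b)=+\infty$. Otherwise let $h^*=\max_{j\in S_2}h(j)$ and $f_2=\tfrac12$ if $|S_2|$ is odd, $f_2=0$ if $|S_2|$ is even. Then $\pi_R(b)=\lceil f_2+f_3+f_4\rceil$ and $z(b)=2h^*\,(\pi_1+\lfloor |S_2|/2\rfloor+\pi_3+\pi_4+\pi_R(b))$. - The value returned by algorithm PW'' is $H^{PW''}=\min\{z(a),z(b)\}$. The paper takes this as the maximum height of the periodic pinwheel trimming schedule that it builds from these partitions. *)

(* Defs.v *)
From Stdlib Require Import Reals Arith.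
Open Scope R_scope.

Fixpoint sumR (n : nat) (f : nat -> R) : R :=
  match n with 0%nat => 0 | S m => sumR m f + f (S m) end.

Fixpoint maxR (n : nat) (f : nat -> R) : R :=
  match n with 0%nat => 0 | S m => Rmax (maxR m f) (f (S m)) end.

Fixpoint countN (n : nat) (b : nat -> bool) : nat :=
  match n with 0%nat => 0%nat | S m => (countN m b + (if b (S m) then 1 else 0))%nat end.

Definition Rltb (x y : R) : bool := if Rlt_dec x y then true else false.
Definition Rleb (x y : R) : bool := if Rle_dec x y then true else false.

(* floor and ceiling; Int_part x = up x - 1 is the floor of x *)
Definition Rfloor (x : R) : R := IZR (Int_part x).
Definition Rceil (x : R) : R := - Rfloor (- x).

Definition instance (n : nat) (h : nat -> R) : Prop :=
  (1 <= n)%nat /\ h 1%nat = 1 /\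
  (forall j, (1 <= j)%nat -> (j < n)%nat -> h (S j) <= h j) /\
  0 < h n.

(* A schedule cuts, at the end of each day t >= 1, a bamboo in {1..n}. *)
Definition schedule (n : nat) (sigma : nat -> nat) : Prop :=
  forall t, (1 <= t)%nat -> (1 <= sigma t)%nat /\ (sigma t <= n)%nat.

(* height of bamboo j at the end of day t, just before the cut of day t
   (day 0 = initial state, height 0) *)
Fixpoint height_before (h : nat -> R) (sigma : nat -> nat) (j t : nat) : R :=
  match t with
  | 0%nat => 0
  | S t' =>
      (match t' with
       | 0%nat => 0
       | S _ => if Nat.eqb (sigma t') j then 0 else height_before h sigma j t'
       end) + h j
  end.

Definition heights (n : nat) (h : nat -> R) (sigma : nat -> nat) (x : R) : Prop :=
  exists t j, (1 <= t)%nat /\ (1 <= j)%nat /\ (j <= n)%nat /\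
              x = height_before h sigma j t.

(* values of (finite) heights of schedules: the height of sigma is the
   supremum of its heights *)
Definition schedule_height_value (n : nat) (h : nat -> R) (x : R) : Prop :=
  exists sigma, schedule n sigma /\ is_lub (heights n h sigma) x.

Definition is_glb (E : R -> Prop) (m : R) : Prop :=
  (forall x, E x -> m <= x) /\ (forall b, (forall x, E x -> b <= x) -> b <= m).

Definition is_Hstar (n : nat) (h : nat -> R) (Hs : R) : Prop :=
  is_glb (schedule_height_value n h) Hs.

(* k j is the integer k >= 1 with 2^-(k+1) < h j <= 2^-k (for h j <= 1/2);
   it is passed as a parameter and characterised by a hypothesis. *)

Definition valid_k (n : nat) (h : nat -> R) (k : nat -> nat) : Prop :=
  forall j, (1 <= j)%nat -> (j <= n)%nat -> h j <= 1/2 ->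
    (1 <= k j)%nat /\ (/2) ^ (S (k j)) < h j /\ h j <= (/2) ^ (k j).

Section PW.
Variables (n : nat) (h : nat -> R) (k : nat -> nat).

Definition inS1 (j : nat) : bool := Rltb (2/3) (h j) && Rleb (h j) 1.
Definition inS2 (j : nat) : bool := Rltb (1/2) (h j) && Rleb (h j) (2/3).
Definition inS3 (j : nat) : bool :=
  Rleb (h j) (1/2) && Rltb (2/3 * (/2) ^ (k j)) (h j) && Rleb (h j) ((/2) ^ (k j)).
Definition inS4 (j : nat) : bool :=
  Rleb (h j) (1/2) && Rltb ((/2) ^ (S (k j))) (h j) && Rleb (h j) (2/3 * (/2) ^ (k j)).

Definition pi1 : R := INR (countN n inS1).
Definition cardS2 : nat := countN n inS2.
Definition sh3 : R := sumR n (fun j => if inS3 j then (/2) ^ (k j) else 0).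
Definition sh4 : R := sumR n (fun j => if inS4 j then 2/3 * (/2) ^ (k j) else 0).
Definition pi3 : R := Rfloor sh3.
Definition pi4 : R := Rfloor sh4.
Definition f3 : R := sh3 - pi3.
Definition f4 : R := sh4 - pi4.

Definition z_a : R := pi1 + INR cardS2 + pi3 + pi4 + Rceil (f3 + f4).

Definition hstar : R := maxR n (fun j => if inS2 j then h j else 0).
Definition f2 : R := if Nat.odd cardS2 then 1/2 else 0.
Definition z_b : R :=
  2 * hstar * (pi1 + INR (Nat.div2 cardS2) + pi3 + pi4 + Rceil (f2 + f3 + f4)).

(* min{z(a), z(b)} with z(b) = +infinity when S2 is empty *)
Definition H_PW : R := if Nat.eqb cardS2 0 then z_a else Rmin z_a z_b.

End PW.

(* Main.v *)
Require Import Defs.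
From Stdlib Require Import Reals Arith.
From Stdlib Require Import Lra Lia ZArith.
Open Scope R_scope.

Lemma sumR_plus n f g : sumR n (fun j => f j + g j) = sumR n f + sumR n g.
Proof. induction n; simpl; [lra| rewrite IHn; lra]. Qed.

Lemma sumR_scal n c f : sumR n (fun j => c * f j) = c * sumR n f.
Proof. induction n; simpl; [lra| rewrite IHn; lra]. Qed.

Lemma sumR_le n f g : (forall j, (1 <= j)%nat -> (j <= n)%nat -> f j <= g j) ->
  sumR n f <= sumR n g.
Proof.
  induction n; intros H; simpl; [lra|].
  assert (sumR n f <= sumR n g) by (apply IHn; intros; apply H; lia).
  assert (f (S n) <= g (S n)) by (apply H; lia). lra.
Qed.

Lemma sumR_nonneg n f : (forall j, (1 <= j)%nat -> (j <= n)%nat -> 0 <= f j) -> 0 <= sumR n f.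
Proof.
  intros H. replace 0 with (sumR n (fun _ => 0)).
  - apply sumR_le; auto.
  - clear; induction n; simpl; lra.
Qed.

Lemma sumR_ge_first n f : (1 <= n)%nat ->
  (forall j, (1 <= j)%nat -> (j <= n)%nat -> 0 <= f j) -> f 1%nat <= sumR n f.
Proof.
  induction n; intros Hn H; [lia|]. simpl.
  destruct n.
  - simpl. lra.
  - assert (f 1%nat <= sumR (S n) f) by (apply IHn; [lia| intros; apply H; lia]).
    assert (0 <= f (S (S n))) by (apply H; lia). lra.
Qed.

Lemma maxR_ge n f j : (1 <= j)%nat -> (j <= n)%nat -> f j <= maxR n f.
Proof.
  induction n; intros H1 H2; [lia|]. simpl.
  destruct (Nat.eq_dec j (S n)).
  - subst. apply Rmax_r.
  - eapply Rle_trans; [apply IHn; lia| apply Rmax_l].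
Qed.

Lemma maxR_le n f c : 0 <= c -> (forall j, (1 <= j)%nat -> (j <= n)%nat -> f j <= c) ->
  maxR n f <= c.
Proof.
  induction n; intros Hc H; simpl; [lra|].
  apply Rmax_lub; [apply IHn; auto; intros; apply H; lia| apply H; lia].
Qed.

Lemma maxR_le_sum n f : (forall j, (1 <= j)%nat -> (j <= n)%nat -> 0 <= f j) ->
  maxR n f <= sumR n f.
Proof.
  induction n; intros H; simpl; [lra|].
  assert (maxR n f <= sumR n f) by (apply IHn; intros; apply H; lia).
  assert (0 <= sumR n f) by (apply sumR_nonneg; intros; apply H; lia).
  assert (0 <= f (S n)) by (apply H; lia).
  apply Rmax_lub; lra.
Qed.

Lemma countN_pos n b : countN n b <> 0%nat -> exists j, (1 <= j)%nat /\ (j <= n)%nat /\ b j = true.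
Proof.
  induction n; simpl; intros H; [lia|].
  destruct (b (S n)) eqn:E.
  - exists (S n); repeat split; auto; lia.
  - destruct IHn as [j [? [? ?]]]; [lia|]. exists j; repeat split; auto; lia.
Qed.

Lemma countN_first n b : (1 <= n)%nat -> b 1%nat = true -> (1 <= countN n b)%nat.
Proof.
  induction n; intros Hn Hb; [lia|]. simpl.
  destruct n; [simpl; rewrite Hb; lia|].
  specialize (IHn ltac:(lia) Hb). lia.
Qed.

Lemma Rfloor_nonneg x : 0 <= x -> 0 <= Rfloor x.
Proof.
  intros H. unfold Rfloor. destruct (base_Int_part x) as [_ H2].
  assert (IZR (Int_part x) > -1) by lra.
  apply lt_IZR in H0. apply IZR_le. lia.
Qed.

Lemma Rfloor_zero x : Rfloor x = 0 -> x < 1.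
Proof.
  unfold Rfloor. intros H. destruct (base_Int_part x) as [_ H2]. lra.
Qed.

Lemma Rceil_le x (m : Z) : x <= IZR m -> Rceil x <= IZR m.
Proof.
  intros H. unfold Rceil, Rfloor. destruct (base_Int_part (- x)) as [_ H2].
  assert (IZR (Int_part (-x)) > IZR (- m - 1)) by (rewrite minus_IZR, opp_IZR; lra).
  apply lt_IZR in H0. assert (IZR (- m) <= IZR (Int_part (-x))) by (apply IZR_le; lia).
  rewrite opp_IZR in H1. lra.
Qed.

Fixpoint cnt (sigma : nat -> nat) (j T : nat) : R :=
  match T with 0%nat => 0 | S T' => cnt sigma j T' + (if Nat.eqb (sigma (S T')) j then 1 else 0) end.

Lemma cnt_inv h sigma v j :
  (forall t, (1 <= t)%nat -> height_before h sigma j t <= v) ->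
  forall T, h j * INR (S T) <= v * cnt sigma j T + height_before h sigma j (S T).
Proof.
  intros Hb T. induction T.
  - simpl. lra.
  - assert (Hv : height_before h sigma j (S T) <= v) by (apply Hb; lia).
    change (height_before h sigma j (S (S T))) with
      ((if Nat.eqb (sigma (S T)) j then 0 else height_before h sigma j (S T)) + h j).
    rewrite S_INR. simpl cnt.
    destruct (Nat.eqb (sigma (S T)) j); lra.
Qed.

Lemma ind_zero m n : (n < m)%nat -> sumR n (fun j => if Nat.eqb m j then 1 else 0) = 0.
Proof.
  induction n; intros H; simpl; [lra|].
  rewrite IHn by lia. destruct (Nat.eqb m (S n)) eqn:E; [apply Nat.eqb_eq in E; lia| lra].
Qed.

Lemma ind_one m n : (1 <= m)%nat -> (m <= n)%nat ->
  sumR n (fun j => if Nat.eqb m j then 1 else 0) = 1.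
Proof.
  induction n; intros H1 H2; [lia|]. simpl.
  destruct (Nat.eqb m (S n)) eqn:E.
  - apply Nat.eqb_eq in E. rewrite ind_zero by lia. lra.
  - apply Nat.eqb_neq in E. rewrite IHn by lia. lra.
Qed.

Lemma cnt_sum n sigma : schedule n sigma -> forall T, sumR n (fun j => cnt sigma j T) = INR T.
Proof.
  intros Hs T. induction T.
  - simpl. clear. induction n; simpl; lra.
  - simpl cnt. rewrite sumR_plus, IHT.
    destruct (Hs (S T)) as [H1 H2]; [lia|].
    rewrite ind_one by auto. rewrite S_INR. lra.
Qed.

Lemma nat_unbounded r : exists T : nat, r < INR T.
Proof.
  destruct (Rle_or_lt r 0).
  - exists 1%nat. simpl. lra.
  - destruct (archimed r) as [H1 _].
    assert (0 < up r)%Z by (apply lt_IZR; lra).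
    exists (Z.to_nat (up r)). rewrite INR_IZR_INZ, Z2Nat.id by lia. lra.
Qed.

Lemma density n h sigma v : (1 <= n)%nat -> h 1%nat = 1 -> schedule n sigma ->
  (forall t j, (1 <= t)%nat -> (1 <= j)%nat -> (j <= n)%nat -> height_before h sigma j t <= v) ->
  sumR n h <= v.
Proof.
  intros Hn Hh1 Hs Hb.
    assert (Hv : 0 <= v).
  { assert (height_before h sigma 1 1 <= v) by (apply Hb; lia). simpl in H. lra. }
  assert (Key : forall T, sumR n h * INR (S T) <= v * (INR T + INR n)).
  { intros T.
    assert (sumR n (fun j => h j * INR (S T)) <= sumR n (fun j => v * (cnt sigma j T + 1))).
    { apply sumR_le. intros j H1 H2.
      pose proof (cnt_inv h sigma v j (fun t Ht => Hb t j Ht H1 H2) T).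
      assert (height_before h sigma j (S T) <= v) by (apply Hb; lia). lra. }
    rewrite sumR_scal in H. rewrite sumR_plus, cnt_sum in H by auto.
    replace (sumR n (fun j => h j * INR (S T))) with (sumR n h * INR (S T)) in H.
    2:{ clear. induction n; cbn [sumR]; [lra| rewrite <- IHn; lra]. }
    replace (sumR n (fun _ => 1)) with (INR n) in H; [lra|].
    clear. induction n; cbn [sumR]; [simpl; lra| rewrite S_INR, IHn; lra]. }
  destruct (Rle_or_lt (sumR n h) v) as [|Hlt]; auto.
  destruct (nat_unbounded (v * INR n / (sumR n h - v))) as [T HT].
  specialize (Key T). rewrite S_INR in Key.
  assert (v * INR n < INR T * (sumR n h - v)).
  { apply (Rmult_lt_compat_r (sumR n h - v)) in HT; [|lra].
    unfold Rdiv in HT. rewrite Rmult_assoc, Rinv_l in HT; lra. }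
  assert (0 <= INR T) by apply pos_INR. nra.
Qed.

Lemma Hs_ge n h Hs : (1 <= n)%nat -> h 1%nat = 1 -> is_Hstar n h Hs -> sumR n h <= Hs.
Proof.
  intros Hn Hh1 [_ H]. apply H. intros x [sigma [Hsch [Hub _]]].
  apply (density n h sigma); auto.
  intros t j H1 H2 H3. apply Hub. exists t, j. repeat split; auto.
Qed.

Lemma h_pos n h : instance n h -> forall j, (1 <= j)%nat -> (j <= n)%nat -> 0 < h j.
Proof.
  intros [Hn [H1 [Hm Hp]]].
  assert (forall d j, (1 <= j)%nat -> (j + d = n)%nat -> 0 < h j).
  { induction d; intros j Hj E.
    - replace j with n by lia. auto.
    - assert (0 < h (S j)) by (apply IHd; lia).
      assert (h (S j) <= h j) by (apply Hm; lia). lra. }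
  intros j Hj Hjn. apply (H (n - j)%nat); lia.
Qed.

Lemma pointwise h k j : 0 <= h j ->
  (if inS1 h j then h j else 0) + (if inS2 h j then h j else 0)
  + (2/3) * ((if inS3 h k j then (/2) ^ (k j) else 0)
             + (if inS4 h k j then 2/3 * (/2) ^ (k j) else 0)) <= h j.
Proof.
  intros H0.
  assert (0 < (/2) ^ (k j)) by (apply pow_lt; lra).
  unfold inS1, inS2, inS3, inS4, Rltb, Rleb. simpl pow.
  repeat (destruct (Rlt_dec _ _)); repeat (destruct (Rle_dec _ _)); simpl; lra.
Qed.

Theorem proposition7 (n : nat) (h : nat -> R) (k : nat -> nat) (Hs : R) :
  instance n h ->
  valid_k n h k ->
  cardS2 n h = 1%nat ->
  pi1 n h + pi3 n h k + pi4 n h k - 1 = 0 ->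
  is_Hstar n h Hs ->
  H_PW n h k <= 20/11 * Hs.
Proof.
  intros Hinst _ Hcard Hpi HHs.
  pose proof Hinst as [Hn [H1 _]].
  pose proof (h_pos n h Hinst) as Hpos.
  assert (HS := Hs_ge n h Hs Hn H1 HHs).
  assert (Hpi1 : 1 <= pi1 n h).
  { unfold pi1. replace 1 with (INR 1) by reflexivity. apply le_INR.
    apply countN_first; auto. unfold inS1, Rltb, Rleb. rewrite H1.
    destruct (Rlt_dec _ _); destruct (Rle_dec _ _); simpl; auto; lra. }
  assert (Hsh3 : 0 <= sh3 n h k).
  { apply sumR_nonneg. intros. destruct (inS3 h k j); [apply pow_le; lra| lra]. }
  assert (Hsh4 : 0 <= sh4 n h k).
  { apply sumR_nonneg. intros. destruct (inS4 h k j); [|lra].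
    assert (0 <= (/2) ^ (k j)) by (apply pow_le; lra). lra. }
  assert (P3 := Rfloor_nonneg _ Hsh3). assert (P4 := Rfloor_nonneg _ Hsh4).
  unfold pi3, pi4 in Hpi.
  assert (E3 : Rfloor (sh3 n h k) = 0) by lra.
  assert (E4 : Rfloor (sh4 n h k) = 0) by lra.
  assert (E1 : pi1 n h = 1) by lra.
  assert (L3 := Rfloor_zero _ E3). assert (L4 := Rfloor_zero _ E4).
  destruct (countN_pos n (inS2 h)) as [j0 [Hj1 [Hj2 Hj]]].
  { unfold cardS2 in Hcard. lia. }
  set (y := hstar n h).
  assert (Hy1 : 1/2 < y).
  { assert (h j0 <= y).
    { unfold y, hstar. pose proof (maxR_ge n (fun j => if inS2 h j then h j else 0) j0 Hj1 Hj2).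
      simpl in H. rewrite Hj in H. auto. }
    unfold inS2, Rltb, Rleb in Hj.
    destruct (Rlt_dec _ _); simpl in Hj; [lra| discriminate]. }
  assert (Hy2 : y <= 2/3).
  { unfold y, hstar. apply maxR_le; [lra|]. intros j _ _.
    unfold inS2, Rltb, Rleb.
    destruct (Rlt_dec _ _); destruct (Rle_dec _ _); simpl; lra. }
  set (x := sh3 n h k + sh4 n h k).
  assert (HSb : 1 + y + 2/3 * x <= sumR n h).
  { eapply Rle_trans; [| apply sumR_le; intros j Ha Hb; apply (pointwise h k j);
                         left; apply Hpos; auto].
    rewrite !sumR_plus, sumR_scal, sumR_plus.
    assert (1 <= sumR n (fun j => if inS1 h j then h j else 0)).
    { rewrite <- H1. replace (h 1%nat) with (if inS1 h 1 then h 1%nat else 0).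
      - apply (sumR_ge_first n (fun j => if inS1 h j then h j else 0)); auto. intros j Ha Hb. destruct (inS1 h j); [left; apply Hpos; auto| lra].
      - unfold inS1, Rltb, Rleb. rewrite H1.
        destruct (Rlt_dec _ _); destruct (Rle_dec _ _); simpl; auto; lra. }
    assert (y <= sumR n (fun j => if inS2 h j then h j else 0)).
    { apply maxR_le_sum. intros j Ha Hb. destruct (inS2 h j); [left; apply Hpos; auto| lra]. }
    unfold x, sh3, sh4 in *. lra. }
  unfold H_PW. rewrite Hcard. simpl Nat.eqb. cbv iota.
  unfold z_a, z_b, f2, f3, f4. rewrite Hcard. unfold pi3, pi4.
  rewrite E1, E3, E4. simpl Nat.odd. simpl Nat.div2. cbv iota. simpl INR.
  fold y.
  change (if Nat.odd 1 then 1/2 else 0) with (1/2).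
  replace (sh3 n h k - 0 + (sh4 n h k - 0)) with x by (unfold x; ring).
  replace (1/2 + (sh3 n h k - 0) + (sh4 n h k - 0)) with (1/2 + x) by (unfold x; ring).
  assert (Hx0 : 0 <= x) by (unfold x; lra).
  assert (Hx2 : x < 2) by (unfold x; lra).
  destruct (Rle_or_lt x 0).
  - assert (Rceil x <= IZR 0) by (apply Rceil_le; simpl; lra). simpl in H.
    eapply Rle_trans; [apply Rmin_l|]. lra.
  - destruct (Rle_or_lt x (1/2)).
    + assert (Rceil (1/2 + x) <= IZR 1) by (apply Rceil_le; simpl; lra). simpl in H2.
      eapply Rle_trans; [apply Rmin_r|]. nra.
    + destruct (Rle_or_lt x 1).
      * assert (Rceil x <= IZR 1) by (apply Rceil_le; simpl; lra). simpl in H3.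
        eapply Rle_trans; [apply Rmin_l|]. lra.
      * destruct (Rle_or_lt x (3/2)).
        -- assert (Rceil (1/2 + x) <= IZR 2) by (apply Rceil_le; simpl; lra). simpl in H4.
           eapply Rle_trans; [apply Rmin_r|]. nra.
        -- assert (Rceil x <= IZR 2) by (apply Rceil_le; simpl; lra). simpl in H4.
           eapply Rle_trans; [apply Rmin_l|]. lra.
Qed.
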